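(* Let $\omega$ and $\omega'$ be two nonsingular Sturmian words (not necessarily of the same slope, i.e. not necessarily with the same set of factors). Then for every nonempty prefix $u$ of $\omega$ and every nonempty prefix $u'$ of $\omega'$, the set $\omega|_u\cap\omega'|_{u'}$ is an IP$^*$-set (respectively, a central$^*$ set); in particular it is infinite.
   Context: A Sturmian word is an infinite word over $\{0,1\}$ having exactly $k+1$ distinct factors of length $k$ for every $k\ge0$. With $T$ the shift and $\Omega$ the shift-orbit closure of a Sturmian word $\omega$, the characteristic word $\tilde\omega$ is the unique element of $\Omega$ all of whose prefixes $v$ are left special ($0v$, $1v$ both factors of $\omega$); $\omega$ is nonsingular if $T^n(\omega)\ne\tilde\omega$ for all $n\ge1$. $\omega|_u=\{n\in\mathbb N:\omega_n\cdots\omega_{n+|u|-1}=u\}$. A set $A\subseteq\mathbb N$ is an IP-set if there is $x_0<x_1<\cdots$ in $\mathbb N$ with $\sum_{n\in F}x_n\in A$ for all nonempty finite $F$; IP$^*$ if it meets every IP-set. $\beta\mathbb N$ is the set of ultrafilters on $\mathbb N$ with addition $A\in p+q$ iff $\{n:A-n\in p\}\in q$; a minimal idempotent is a non-principal $p=p+p$ in the smallest two-sided ideal of $\beta\mathbb N$; central sets are members of some minimal idempotent, and central$^*$ sets are sets belonging to every minimal idempotent. *)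

(* Defs.v *)
From mathcomp Require Import all_boot.
Set Implicit Arguments. Unset Strict Implicit. Unset Printing Implicit Defensive.

(* Infinite words over {0,1}: bool, with false = 0, true = 1. *)
Definition word := nat -> bool.

Definition factor (w : word) (n k : nat) : seq bool := mkseq (fun i => w (n + i)) k.

Definition isFactor (w : word) (v : seq bool) : Prop :=
  exists n, factor w n (size v) = v.

Definition sturmian (w : word) : Prop :=
  forall k, exists s : seq (seq bool),
    uniq s /\ size s = k.+1 /\
    (forall v, v \in s <-> exists n, v = factor w n k).

(* shift-orbit closure (product topology): every prefix of x is a factor of w *)
Definition inOrbitClosure (w x : word) : Prop :=
  forall k, isFactor w (factor x 0 k).

Definition leftSpecial (w : word) (v : seq bool) : Prop :=
  isFactor w (false :: v) /\ isFactor w (true :: v).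

Definition characteristic (w c : word) : Prop :=
  inOrbitClosure w c /\ forall k, leftSpecial w (factor c 0 k).

Definition nonsingular (w : word) : Prop :=
  forall c, characteristic w c -> forall n, 1 <= n -> exists m, w (n + m) <> c m.

Definition occ (w : word) (u : seq bool) : nat -> Prop :=
  fun n => factor w n (size u) = u.

Definition IPset (A : nat -> Prop) : Prop :=
  exists x : nat -> nat, (forall i, x i < x i.+1) /\
    forall F : seq nat, F != [::] -> uniq F -> A (\sum_(i <- F) x i).

Definition IPstar (A : nat -> Prop) : Prop :=
  forall B, IPset B -> exists n, A n /\ B n.

Definition ufilter := (nat -> Prop) -> Prop.

Definition ultrafilter (p : ufilter) : Prop :=
  p (fun _ => True) /\ ~ p (fun _ => False) /\
  (forall A B : nat -> Prop, (forall n, A n -> B n) -> p A -> p B) /\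
  (forall A B, p A -> p B -> p (fun n => A n /\ B n)) /\
  (forall A, p A \/ p (fun n => ~ A n)).

Definition nonprincipal (p : ufilter) : Prop := forall n, ~ p (fun m => m = n).

Definition uadd (p q : ufilter) : ufilter :=
  fun A => q (fun n => p (fun m => A (m + n))).

Definition ideal (I : ufilter -> Prop) : Prop :=
  (forall p, I p -> ultrafilter p) /\ (exists p, I p) /\
  (forall p q, I p -> ultrafilter q -> I (uadd p q) /\ I (uadd q p)).

(* membership in the smallest two-sided ideal K(beta N) = intersection of all ideals *)
Definition inK (p : ufilter) : Prop :=
  ultrafilter p /\ forall I, ideal I -> I p.

Definition minimal_idempotent (p : ufilter) : Prop :=
  ultrafilter p /\ nonprincipal p /\ (forall A, uadd p p A <-> p A) /\ inK p.

Definition central_star (A : nat -> Prop) : Prop :=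
  forall p, minimal_idempotent p -> p A.

Definition infinite_set (A : nat -> Prop) : Prop :=
  forall N, exists n, N <= n /\ A n.

(* Main.v *)
Require Import Defs.
From mathcomp Require Import all_boot zify.
Set Implicit Arguments. Unset Strict Implicit. Unset Printing Implicit Defensive.
From Stdlib Require Import Classical ClassicalEpsilon.

From mathcomp Require Import all_boot zify.
From Stdlib Require Import Classical ClassicalEpsilon.

Lemma size_factor w n k : size (factor w n k) = k.
Proof. by rewrite /factor size_mkseq. Qed.

Lemma nth_factor w n k i : i < k -> nth false (factor w n k) i = w (n + i).
Proof. by move=> h; rewrite /factor nth_mkseq. Qed.

Lemma factorP w w' n n' k :
  factor w n k = factor w' n' k <-> (forall i, i < k -> w (n + i) = w' (n' + i)).
Proof.
split.
- by move=> E i hi; rewrite -!(nth_factor _ _ hi) E.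
- move=> H; apply: (@eq_from_nth _ false); first by rewrite !size_factor.
  by move=> i; rewrite size_factor => hi; rewrite !nth_factor // H.
Qed.

Lemma factorS w n k : factor w n k.+1 = rcons (factor w n k) (w (n + k)).
Proof. by rewrite /factor mkseqS. Qed.

Lemma factorS' w n k : factor w n k.+1 = w n :: factor w n.+1 k.
Proof.
apply: (@eq_from_nth _ false); first by rewrite size_factor [size (_ :: _)]/= size_factor.
move=> i; rewrite size_factor => hi; rewrite nth_factor //.
case: i hi => [|i] hi /=; first by rewrite addn0.
by rewrite nth_factor // addSnnS.
Qed.

Lemma factor_take w a L L' : L <= L' -> factor w a L = take L (factor w a L').
Proof.
move=> h; apply: (@eq_from_nth _ false).
  by rewrite size_take !size_factor; case: ltnP => //; lia.
move=> i; rewrite size_factor => hi; rewrite nth_take // !nth_factor //; lia.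
Qed.

Lemma pigeon N (f : nat -> nat) :
  (forall i, i <= N -> f i < N) -> exists i j, i < j <= N /\ f i = f j.
Proof.
elim: N f => [|N IH] f hf; first by have := hf 0 (leqnn 0).
case: (classic (exists i, i <= N /\ f i = f N.+1)) => [[i [hi e]]|ne].
  by exists i, N.+1; split => //; rewrite ltnS hi leqnn.
pose g i := if f i < f N.+1 then f i else (f i).-1.
have hg : forall i, i <= N -> g i < N.
  move=> i hi; rewrite /g; have h1 := hf i (leqW hi); have h2 := hf _ (leqnn N.+1).
  have h3 : f i <> f N.+1 by move=> e; apply: ne; exists i.
  case: (ltnP (f i) (f N.+1)) => h; lia.
have [i [j [hij e]]] := IH g hg.
exists i, j; split; first lia.
have hi : f i <> f N.+1 by move=> e'; apply: ne; exists i; split=> //; lia.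
have hj : f j <> f N.+1 by move=> e'; apply: ne; exists j; split=> //; lia.
move: e; rewrite /g; case: (ltnP (f i) (f N.+1)); case: (ltnP (f j) (f N.+1)); lia.
Qed.

Lemma sturm_list w k : sturmian w -> exists s : seq (seq bool),
  uniq s /\ size s = k.+1 /\ (forall n, factor w n k \in s) /\
  (forall v, v \in s -> exists n, v = factor w n k).
Proof.
move=> /(_ k) [s [us [ss hs]]]; exists s; split=> //; split=> //; split.
- by move=> n; apply/hs; exists n.
- by move=> v /hs.
Qed.

Lemma EP w : sturmian w -> forall M P, 0 < P -> (forall i, M <= i -> w (i + P) = w i) -> False.
Proof.
move=> sw M P hP hper.
have per : forall q r, w (M + r + q * P) = w (M + r).
  elim=> [|q IH] r; first by rewrite mul0n addn0.
  have -> : M + r + q.+1 * P = (M + r + q * P) + P by rewrite mulSn; lia.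
  by rewrite hper ?IH //; lia.
pose rep n := if n < M then n else M + (n - M) %% P.
have hrep : forall n t, w (n + t) = w (rep n + t).
  move=> n t; rewrite /rep; case: (ltnP n M) => // hn.
  have := divn_eq (n - M) P => e.
  rewrite -addnA -(per ((n - M) %/ P) ((n - M) %% P + t)); congr w; lia.
have hrepb : forall n, rep n < M + P.
  move=> n; rewrite /rep; case: (ltnP n M) => hn; first lia.
  have := ltn_pmod (n - M) hP; lia.
have [s [us [ss [_ hs]]]] := sturm_list (M + P) sw.
have : size s <= size (map (fun i => factor w i (M + P)) (iota 0 (M + P))).
  apply: uniq_leq_size => // v /hs [n ->].
  apply/mapP; exists (rep n); first by rewrite mem_iota add0n hrepb.
  by apply/factorP => i _; rewrite hrep.
by rewrite size_map size_iota ss ltnn.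
Qed.

Lemma shift_eq y K i j : (forall n n', factor y n K = factor y n' K -> y (n + K) = y (n' + K)) ->
  factor y i K = factor y j K -> forall u, factor y (i + u) K = factor y (j + u) K.
Proof.
move=> D e; elim=> [|u IH]; first by rewrite !addn0.
apply/factorP => v hv.
case: (ltnP v.+1 K) => h.
  move/factorP: IH => /(_ v.+1 h) H.
  have -> : i + u.+1 + v = i + u + v.+1 by lia.
  by have -> : j + u.+1 + v = j + u + v.+1 by lia.
have -> : v = K.-1 by lia.
have := D _ _ IH; have -> : i + u.+1 + K.-1 = i + u + K by lia.
by have -> : j + u.+1 + K.-1 = j + u + K by lia.
Qed.

Lemma MH y K (s : seq (seq bool)) : size s <= K -> (forall n, factor y n K \in s) ->
  exists M P, 0 < P /\ forall i, M <= i -> y (i + P) = y i.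
Proof.
elim: K s => [|K IH] s hs hf.
  by case: s hs hf => [|a l] // _ /(_ 0).
case: (classic (exists n n', factor y n K = factor y n' K /\ y (n + K) <> y (n' + K))).
  move=> [n [n' [e ne]]].
  set u2 := factor y n' K.+1.
  apply: (IH (map (take K) (filter (predC1 u2) s))).
    rewrite size_map size_filter.
    have h1 := count_predC (predC1 u2) s.
    have h2 : 0 < count (predC (predC1 u2)) s.
      rewrite -has_count; apply/hasP; exists u2; first exact: hf.
      by rewrite /= eqxx.
    move: hs; rewrite -h1; move: h2; move: (count (predC (predC1 u2)) s) (count (predC1 u2) s) => a b; lia.
  move=> m; apply/mapP.
  case: (eqVneq (factor y m K.+1) u2) => hm.
    exists (factor y n K.+1).
      rewrite mem_filter hf andbT /= /u2 !factorS.
      apply/eqP => /rcons_inj [_ ]; exact: ne.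
    by rewrite -factor_take // e (factor_take y n' (leqnSn K)) -/u2 -hm -factor_take.
  by exists (factor y m K.+1); [rewrite mem_filter /= hm hf | rewrite -factor_take].
move=> nD.
have D : forall n n', factor y n K = factor y n' K -> y (n + K) = y (n' + K).
  move=> n n' e; case: (y (n + K) =P y (n' + K)) => // ne; exfalso; apply: nD.
  by exists n, n'.
set t := map (take K) s.
have ht : forall n, factor y n K \in t.
  by move=> n; apply/mapP; exists (factor y n K.+1) => //; rewrite -factor_take.
have hb : forall i, i <= K.+1 -> index (factor y i K) t < K.+1.
  move=> i _; apply: (@leq_trans (size t)); first by rewrite index_mem ht.
  by rewrite size_map.
have [i [j [hij e]]] := @pigeon K.+1 (fun i => index (factor y i K) t) hb.
have eij : factor y i K = factor y j K.
  by rewrite -(nth_index [::] (ht i)) -(nth_index [::] (ht j)) /= e.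
exists (i + K), (j - i); split; first lia.
move=> m hm.
have := D _ _ (shift_eq D eij (m - i - K)).
have -> : i + (m - i - K) + K = m by lia.
by have -> : j + (m - i - K) + K = m + (j - i) by lia.
Qed.

Lemma factor_shift w N n L : factor (fun i => w (N + i)) n L = factor w (N + n) L.
Proof. by apply/factorP => i _; rewrite addnA. Qed.

Lemma recur w : sturmian w -> forall n0 L N, exists n, N <= n /\ factor w n L = factor w n0 L.
Proof.
move=> sw n0 L N; apply: NNPP => hne.
set u := factor w n0 L.
have [sx [ux [sz [hx _]]]] := sturm_list L sw.
have [M [P [hP hper]]] : exists M P, 0 < P /\ forall i, M <= i -> (fun i => w (N + i)) (i + P) = (fun i => w (N + i)) i.
  apply: (MH (K := L) (s := filter (predC1 u) sx)).
    rewrite size_filter.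
    have h1 := count_predC (predC1 u) sx.
    have h2 : 0 < count (predC (predC1 u)) sx.
      by rewrite -has_count; apply/hasP; exists u; [exact: hx | rewrite /= eqxx].
    move: h1 h2; rewrite sz; move: (count (predC (predC1 u)) sx) (count (predC1 u) sx) => a b; lia.
  move=> n; rewrite factor_shift mem_filter hx andbT /=.
  by apply/eqP => e; apply: hne; exists (N + n); split => //; exact: leq_addr.
apply: (EP sw (M := N + M) hP) => i hi.
have := hper (i - N) ltac:(lia) => /=.
have -> : N + (i - N + P) = i + P by lia.
by have -> : N + (i - N) = i by lia.
Qed.

Definition RS w u := isFactor w (rcons u false) /\ isFactor w (rcons u true).

Lemma isFactor_mem w k (s : seq (seq bool)) v : (forall n, factor w n k \in s) -> size v = k -> isFactor w v -> v \in s.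
Proof. by move=> hs hv [n hn]; rewrite -hn hv. Qed.

Lemma isFactor_rcons w u b : isFactor w (rcons u b) -> isFactor w u.
Proof.
move=> [n hn]; exists n; move: hn; rewrite size_rcons factorS => /rcons_inj; case=> -> _.
done.
Qed.

Lemma RS_unique w : sturmian w -> forall u1 u2, size u1 = size u2 -> RS w u1 -> RS w u2 -> u1 = u2.
Proof.
move=> sw u1 u2 hsz [h1a h1b] [h2a h2b]; apply: NNPP => ne.
set k := size u1.
have [sk [uk [szk [hk hk']]]] := sturm_list k sw.
have [sk1 [uk1 [szk1 [hk1 _]]]] := sturm_list k.+1 sw.
pose ext u := if excluded_middle_informative (isFactor w (rcons u true)) then true else false.
have hext : forall u, u \in sk -> isFactor w (rcons u (ext u)) /\ size u = k.
  move=> u /hk' [n ->]; rewrite size_factor; split => //.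
  rewrite /ext; case: excluded_middle_informative => // hn.
  case e: (w (n + k)).
    by exfalso; apply: hn; exists n; rewrite size_rcons size_factor factorS e.
  by exists n; rewrite size_rcons size_factor factorS e.
have m1 : u1 \in sk by apply: (isFactor_mem hk) => //; exact: isFactor_rcons h1a.
have m2 : u2 \in sk by apply: (isFactor_mem hk); [rewrite -hsz | exact: isFactor_rcons h2a].
pose L := map (fun u => rcons u (ext u)) sk ++ [:: rcons u1 (~~ ext u1); rcons u2 (~~ ext u2)].
have : size L <= size sk1.
  apply: uniq_leq_size.
    rewrite cat_uniq; apply/and3P; split.
    - rewrite map_inj_uniq // => a b /rcons_inj; by case.
    - apply/hasPn => v; rewrite !inE => /orP [] /eqP -> ; apply/mapP => [[u hu /rcons_inj [e1 e2]]];
        move: e2; rewrite -e1; by case: (ext _).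
    - rewrite /= inE andbT; apply/eqP => /rcons_inj [e _]; exact: ne.
  move=> v; rewrite mem_cat => /orP [/mapP [u hu ->]|].
    have [hf hs] := hext u hu; apply: (isFactor_mem hk1) => //; by rewrite size_rcons hs.
  rewrite !inE => /orP [] /eqP ->.
    apply: (isFactor_mem hk1); first by rewrite size_rcons.
    by case: (ext u1).
  apply: (isFactor_mem hk1); first by rewrite size_rcons -hsz.
  by case: (ext u2).
by rewrite size_cat size_map szk szk1 /= addn2 ltnn.
Qed.

From mathcomp Require Import all_boot zify.
From Stdlib Require Import Classical ClassicalEpsilon.

Definition wsum (w : word) (i n : nat) : nat := \sum_(t < n) (w (i + t) : nat).

Lemma wsum0 w i : wsum w i 0 = 0.
Proof. by rewrite /wsum big_ord0. Qed.

Lemma wsumS w i n : wsum w i n.+1 = wsum w i n + w (i + n).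
Proof. by rewrite /wsum big_ord_recr. Qed.

Lemma wsumS' w i n : wsum w i n.+1 = w i + wsum w i.+1 n.
Proof.
rewrite /wsum big_ord_recl addn0; congr (_ + _).
by apply: eq_bigr => t _; congr (nat_of_bool (w _)); rewrite -addSnnS.
Qed.

Lemma wsum_add w i a b : wsum w i (a + b) = wsum w i a + wsum w (i + a) b.
Proof.
elim: b => [|b IH]; first by rewrite addn0 wsum0 addn0.
by rewrite addnS !wsumS IH addnA addnA.
Qed.

Lemma wsum_factor w w' i j n : factor w i n = factor w' j n -> wsum w i n = wsum w' j n.
Proof.
move/factorP => h; rewrite /wsum; apply: eq_bigr => t _; by rewrite h.
Qed.

Lemma wsum_le w i n : wsum w i n <= n.
Proof.
elim: n => [|n IH]; first by rewrite wsum0.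
rewrite wsumS; case: (w (i + n)) => /=; lia.
Qed.

Lemma wsum_shift1 w i P : w (i + P) = w i -> wsum w i.+1 P = wsum w i P.
Proof.
move=> e; have := wsumS w i P; rewrite wsumS' e; lia.
Qed.

Section Rauzy.
Variables (w : word) (a : bool) (m : nat) (z : seq bool) (j p : nat).
Hypothesis sw : sturmian w.
Hypothesis hz : size z = m.
Hypothesis bal : forall n i j, n < m.+2 -> wsum w i n <= wsum w j n + 1.
Hypothesis hj : factor w j m.+1 = a :: z.
Hypothesis hj' : w (j + m.+1) = a.
Hypothesis hp : factor w p m.+1 = ~~ a :: z.
Hypothesis NRS : forall n, factor w n m.+1 = ~~ a :: z -> w (n + m.+1) = ~~ a.
Hypothesis DET : forall n n', factor w n m.+1 = factor w n' m.+1 ->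
  factor w n m.+1 <> a :: z -> w (n + m.+1) = w (n' + m.+1).

Local Notation W n := (factor w n m.+1).

Lemma Wstep n n' : W n = W n' -> w (n + m.+1) = w (n' + m.+1) -> W n.+1 = W n'.+1.
Proof.
move/factorP => e e'; apply/factorP => i hi.
case: (ltnP i.+1 m.+1) => h.
  by have := e _ h; rewrite !addnS !addSn.
have -> : i = m by lia.
by rewrite !addSnnS.
Qed.

Lemma follow n n' k : W n = W n' -> (forall k', k' < k -> W (n + k') <> a :: z) ->
  W (n + k) = W (n' + k).
Proof.
move=> e; elim: k => [|k IH] H; first by rewrite !addn0.
have e1 := IH (fun k' hk => H k' (ltnW hk)).
rewrite !addnS; apply: Wstep => //; apply: DET => //; exact: H.
Qed.

Lemma neq_aa : (~~ a :: z) <> (a :: z).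
Proof. by case; case: a. Qed.

Lemma rauzy_false : False.
Proof.
have ex1 : exists t, (j < t) && (W t == a :: z).
  have [t [ht e]] := recur sw j m.+1 j.+1.
  by exists t; rewrite ht e hj eqxx.
case: (ex_minnP ex1) => t1 /andP [jt1 /eqP Wt1] hmin.
have hmin' : forall t, j < t < t1 -> W t <> a :: z.
  move=> t /andP [h1 h2] e; have := hmin t; rewrite h1 e eqxx /= => /(_ isT); lia.
have [q [hq1 hq2]] : exists q, j < q < t1 /\ W q = ~~ a :: z.
  apply: NNPP => nA.
  have nA' : forall q, j < q < t1 -> W q <> ~~ a :: z by move=> q hq e; apply: nA; exists q.
  have [r [hr Wr]] := recur sw p m.+1 t1.+1.
  rewrite hp in Wr.
  have ex2 : exists i, (i <= r) && (W i == a :: z).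
    by exists t1; rewrite Wt1 eqxx andbT; lia.
  have ub2 : forall i, (i <= r) && (W i == a :: z) -> i <= r by move=> i /andP [].
  case: (ex_maxnP ex2 ub2) => o /andP [hor /eqP Wo] hmax.
  have hor' : o < r.
    rewrite ltn_neqAle hor andbT; apply/eqP => e; apply: neq_aa; by rewrite -Wr -e.
  have hmax' : forall i, o < i <= r -> W i <> a :: z.
    move=> i /andP [h1 h2] e; have := hmax i; rewrite h2 e eqxx /= => /(_ isT); lia.
  case ea: (w (o + m.+1) == a).
    have e1 : W o.+1 = W j.+1 by apply: Wstep; [rewrite Wo hj | rewrite (eqP ea) hj'].
    case: (ltnP (r - o) (t1 - j)) => hc.
      have := follow (k := r - o - 1) (esym e1).
      have H : forall k', k' < r - o - 1 -> W (j.+1 + k') <> a :: z.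
        by move=> k' hk; apply: hmin'; lia.
      move=> /(_ H).
      have -> : o.+1 + (r - o - 1) = r by lia.
      rewrite Wr => e2; apply: (nA' (j.+1 + (r - o - 1))); first lia.
      by rewrite e2.
    have := follow (k := t1 - j - 1) (esym e1).
    have H : forall k', k' < t1 - j - 1 -> W (j.+1 + k') <> a :: z.
      by move=> k' hk; apply: hmin'; lia.
    move=> /(_ H).
    have -> : j.+1 + (t1 - j - 1) = t1 by lia.
    rewrite Wt1 => e2; apply: (hmax' (o.+1 + (t1 - j - 1))); first lia.
    by rewrite -e2.
  have ea' : w (o + m.+1) = ~~ a by move/negbT: ea; case: a; case: (w _).
  have e1 : W o.+1 = W r.+1.
    apply/factorP => i hi.
    case: (ltnP i m) => h.
      have := nth_factor w o (k:=m.+1) (i:=i.+1) ltac:(lia).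
      have := nth_factor w r (k:=m.+1) (i:=i.+1) ltac:(lia).
      rewrite Wo Wr /= => h1 h2.
      by rewrite !addSnnS -h1 -h2.
    have -> : i = m by lia.
    by rewrite !addSnnS ea' NRS.
  have PK : forall k, W (o.+1 + k) <> a :: z.
    elim/ltn_ind => k IH.
    case: (ltnP k (r - o)) => hk.
      by apply: hmax'; lia.
    set e := k - (r - o).
    have he : e < k by rewrite /e; lia.
    have := follow (k := e) e1 (fun k' hk' => IH k' (ltn_trans hk' he)).
    have -> : r.+1 + e = o.+1 + k by rewrite /e; lia.
    by move=> <-; apply: IH.
  have [q [hq Wq]] := recur sw j m.+1 o.+1.
  apply: (PK (q - o.+1)); rewrite subnKC //; by rewrite Wq hj.
have hdist : forall i i', j <= i -> i < i' -> i' < t1 -> W i <> W i'.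
  move=> i i' h1 h2 h3 e.
  case: (eqVneq i j) => [eij|nij].
    subst i; apply: (hmin' i'); first lia.
    by rewrite -e hj.
  have := follow (k := t1 - i') e.
  have H : forall k', k' < t1 - i' -> W (i + k') <> a :: z by move=> k' hk; apply: hmin'; lia.
  move=> /(_ H); have -> : i' + (t1 - i') = t1 by lia.
  by rewrite Wt1; apply: hmin'; lia.
have [sk [uk [szk [hk _]]]] := sturm_list m.+1 sw.
have hP : t1 - j <= m.+2.
  have : size (map (fun i => W i) (iota j (t1 - j))) <= size sk.
    apply: uniq_leq_size.
      rewrite map_inj_in_uniq ?iota_uniq // => i i'; rewrite !mem_iota => hi hi' e.
      case: (ltngtP i i') => // c; exfalso.
        by apply: (hdist i i') => //; lia.
      by apply: (hdist i' i) => //; lia.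
    by move=> v /mapP [i _ ->].
  by rewrite size_map size_iota szk.
set P := t1 - j.
have per : forall u, u < m.+1 -> w (t1 + u) = w (j + u).
  move=> u hu; have e : W t1 = W j by rewrite Wt1 hj.
  by move/factorP: e => /(_ u hu).
have wq : forall e, j + e <= q -> wsum w (j + e) P = wsum w j P.
  elim=> [|e IH] he; first by rewrite addn0.
  rewrite addnS wsum_shift1 ?IH //; first lia.
  have -> : j + e + P = t1 + e by rewrite /P; lia.
  apply: per; rewrite /P in hP; lia.
have X : wsum w q P = wsum w j P by have := wq (q - j) ltac:(lia); rewrite subnKC //; lia.
have Sj : wsum w j m.+2 = wsum w j P + wsum w (j + P) (m.+2 - P).
  by rewrite -wsum_add subnKC.
have Sq : wsum w q m.+2 = wsum w q P + wsum w (q + P) (m.+2 - P).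
  by rewrite -wsum_add subnKC.
have b1 := bal (j + P) (q + P) (n := m.+2 - P) ltac:(rewrite /P; lia).
have b2 := bal (q + P) (j + P) (n := m.+2 - P) ltac:(rewrite /P; lia).
have hq' := NRS hq2.
have zj : factor w j.+1 m = z by move: hj; rewrite factorS' => [[]].
have zq : factor w q.+1 m = z by move: hq2; rewrite factorS' => [[]].
have wj0 : w j = a by move: hj; rewrite factorS' => [[]].
have wq0 : w q = ~~ a by move: hq2; rewrite factorS' => [[]].
have T1 : wsum w j m.+2 = a + wsum w j.+1 m + a.
  by rewrite wsumS wsumS' wj0 hj'.
have T2 : wsum w q m.+2 = ~~ a + wsum w q.+1 m + ~~ a.
  by rewrite wsumS wsumS' wq0 hq'.
have Z : wsum w j.+1 m = wsum w q.+1 m by apply: wsum_factor; rewrite zj zq.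
move: T1 T2 Z Sj Sq X b1 b2; case: a => /=; lia.
Qed.

End Rauzy.

Lemma RS_of w u n n' : factor w n (size u) = u -> factor w n' (size u) = u ->
  w (n + size u) <> w (n' + size u) -> RS w u.
Proof.
move=> h1 h2 ne.
have f1 : isFactor w (rcons u (w (n + size u))).
  by exists n; rewrite size_rcons factorS h1.
have f2 : isFactor w (rcons u (w (n' + size u))).
  by exists n'; rewrite size_rcons factorS h2.
move: f1 f2 ne; case: (w (n + size u)); case: (w (n' + size u)) => // f1 f2 _; by split.
Qed.

Theorem balanced w : sturmian w -> forall n i j, wsum w i n <= wsum w j n + 1.
Proof.
move=> sw; elim/ltn_ind => n IH i j; rewrite leqNgt; apply/negP => hc.
have n2 : 1 < n.
  case: n IH hc => [|[|n]] // IH; first by rewrite !wsum0.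
  by rewrite !wsumS !wsum0; case: (w _); case: (w _).
set m := n - 2.
have hn : n = m.+2 by rewrite /m; lia.
rewrite hn in hc IH.
have wi : w i = true /\ w j = false.
  have := IH m.+1 (ltnSn _) i.+1 j.+1.
  move: hc; rewrite !wsumS'; case: (w i); case: (w j) => /=; lia.
have mid : forall k, k <= m -> wsum w i.+1 k = wsum w j.+1 k.
  move=> k hk.
  have p1 := IH k.+1 ltac:(lia) i j.
  have p2 := IH (m.+2 - k.+1) ltac:(lia) (i + k.+1) (j + k.+1).
  have e : m.+2 = k.+1 + (m.+2 - k.+1) by lia.
  move: p1 p2 hc; rewrite {3 4}e !wsum_add !wsumS' (proj1 wi) (proj2 wi) /=.
  move: (wsum w i.+1 k) (wsum w j.+1 k) (wsum w (i + k.+1) (m.+2 - k.+1)) (wsum w (j + k.+1) (m.+2 - k.+1)).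
  lia.
have ez : factor w i.+1 m = factor w j.+1 m.
  apply/factorP => k hk; have := mid k.+1 hk; rewrite !wsumS mid ?(ltnW hk) //.
  case: (w (i.+1 + k)); case: (w (j.+1 + k)) => /=; lia.
have wl : w (i + m.+1) = true /\ w (j + m.+1) = false.
  move: hc; rewrite (wsumS w i m.+1) (wsumS w j m.+1) (wsumS' w i m) (wsumS' w j m) (proj1 wi) (proj2 wi) (wsum_factor ez) -!addSnnS.
  case: (w (i.+1 + m)); case: (w (j.+1 + m)) => /=; lia.
set z := factor w i.+1 m.
have hz : size z = m by rewrite size_factor.
have Fi : factor w i m.+1 = true :: z by rewrite factorS' (proj1 wi).
have Fj : factor w j m.+1 = false :: z by rewrite factorS' (proj2 wi) -ez.
have bal : forall n i j, n < m.+2 -> wsum w i n <= wsum w j n + 1 by move=> *; apply: IH.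
have RSz : RS w z.
  apply: (RS_of (n := j.+1) (n' := i.+1)); rewrite ?hz //.
  by rewrite !addSnnS (proj2 wl) (proj1 wl).
have gen : forall a : bool, ~ RS w (~~ a :: z) ->
  (exists q, factor w q m.+1 = a :: z /\ w (q + m.+1) = a) ->
  (exists q, factor w q m.+1 = ~~ a :: z /\ w (q + m.+1) = ~~ a) -> False.
  move=> a nrs [q [hq hq']] [p [hp hp']].
  apply: (@rauzy_false w a m z q p) => //.
  - move=> n0 hn0; apply: NNPP => ne; apply: nrs.
    apply: (RS_of (n := n0) (n' := p)); rewrite /= ?hz //.
    by rewrite hp'; move: ne; case: (w _) (~~ a).
  - move=> n0 n1 e ne; apply: NNPP => ne2.
    have F0 : factor w n0.+1 m = factor w n1.+1 m.
      by move: e; rewrite !factorS' => [[]].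
    have R0 : RS w (factor w n0.+1 m).
      apply: (RS_of (n := n0.+1) (n' := n1.+1)); rewrite size_factor // -?F0 //.
      by rewrite !addSnnS.
    have E0 : factor w n0.+1 m = z by apply: (RS_unique sw) => //; rewrite size_factor hz.
    have RSn0 : RS w (factor w n0 m.+1).
      apply: (RS_of (n := n0) (n' := n1)); rewrite size_factor // -?e //.
    have wn0 : w n0 = ~~ a.
      move: ne; rewrite factorS' E0 => ne.
      by case: (w n0) (a) ne => [] [] // ne; exfalso; apply: ne.
    by apply: nrs; move: RSn0; rewrite factorS' E0 wn0.
case: (classic (RS w (true :: z))) => hr.
  apply: (gen true).
  - move=> hr'; have := RS_unique sw (u1 := true :: z) (u2 := false :: z) erefl hr hr'; by case.
  - by exists i; rewrite Fi (proj1 wl).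
  - by exists j; rewrite Fj (proj2 wl).
apply: (gen false) => //.
- by exists j; rewrite Fj (proj2 wl).
- by exists i; rewrite Fi (proj1 wl).
Qed.

From mathcomp Require Import all_boot zify.
From Stdlib Require Import Classical ClassicalEpsilon Reals Lra.

Lemma INR_add m n : INR (m + n)%nat = (INR m + INR n)%R.
Proof. exact: plus_INR. Qed.
Lemma INR_mul m n : INR (m * n)%nat = (INR m * INR n)%R.
Proof. exact: mult_INR. Qed.
Lemma INR_leP m n : (m <= n)%nat <-> (INR m <= INR n)%R.
Proof. split; [move/leP; exact: le_INR | move/INR_le/leP; done]. Qed.
Lemma INR_ltP m n : (m < n)%nat <-> (INR m < INR n)%R.
Proof. split; [move/ltP; exact: lt_INR | move/INR_lt/ltP; done]. Qed.
Lemma INR_b (b : bool) : INR b = if b then 1%R else 0%R.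
Proof. by case: b. Qed.

Lemma evconst k (G : nat -> nat) : (forall N, G N <= G N.+1) -> (forall N, G N <= G 0 + k) ->
  exists M, forall N, M <= N -> G N = G M.
Proof.
elim: k G => [|k IH] G mono hb.
  exists 0 => N _; apply/eqP; rewrite eqn_leq; apply/andP; split; first by have := hb N; rewrite addn0.
  elim: N => // N ih; exact: leq_trans ih (mono N).
have monoT : forall a b, a <= b -> G a <= G b.
  move=> a b hab; rewrite -(subnKC hab); elim: (b - a) => [|d ih]; first by rewrite addn0.
  by rewrite addnS (leq_trans ih (mono _)).
case: (classic (forall N, G N = G 0)) => [h|].
  by exists 0 => N _; rewrite h.
move=> /not_all_ex_not [N0 hN0].
have hlt : G 0 < G N0 by rewrite ltn_neqAle monoT // andbT; apply/eqP => e; apply: hN0.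
have m1 : forall n, G (N0 + n) <= G (N0 + n.+1) by move=> n; rewrite addnS; apply: mono.
have m2 : forall n, G (N0 + n) <= G (N0 + 0) + k by move=> n; rewrite addn0; have := hb (N0 + n); lia.
have [M' hM'] := IH (fun n => G (N0 + n)) m1 m2.
exists (N0 + M') => N hN; have := hM' (N - N0) ltac:(lia); by rewrite subnKC //; lia.
Qed.

Section Alpha.
Variable x : word.
Hypothesis bal : forall n i j, wsum x i n <= wsum x j n + 1.
Hypothesis EPx : forall M P, 0 < P -> (forall i, M <= i -> x (i + P) = x i) -> False.

Definition hN n := wsum x 0 n.

Lemma hN_add i l : hN (i + l) = hN i + wsum x i l.
Proof. by rewrite /hN wsum_add. Qed.

Lemma block l c i : c * wsum x i l <= hN (l * c) + c /\ hN (l * c) <= c * (wsum x i l + 1).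
Proof.
elim: c => [|c [IH1 IH2]]; first by rewrite muln0 /hN wsum0.
have -> : l * c.+1 = l * c + l by rewrite mulnS addnC.
rewrite hN_add.
have b1 := bal l i (l * c); have b2 := bal l (l * c) i.
rewrite !mulSn; rewrite !mulnDr !muln1 in IH2 *; split; lia.
Qed.

Open Scope R_scope.

Lemma div_le a b c : 0 < c -> a <= b * c -> a / c <= b.
Proof. move=> hc h; apply: (Rmult_le_reg_r c) => //; rewrite /Rdiv Rmult_assoc Rinv_l; lra. Qed.
Lemma le_div a b c : 0 < c -> a * c <= b -> a <= b / c.
Proof. move=> hc h; apply: (Rmult_le_reg_r c) => //; rewrite /Rdiv Rmult_assoc Rinv_l; lra. Qed.
Lemma div_le' a b c : 0 < c -> a / c <= b -> a <= b * c.
Proof. move=> hc h; have := Rmult_le_compat_r c _ _ (Rlt_le _ _ hc) h; rewrite /Rdiv Rmult_assoc Rinv_l; lra. Qed.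
Lemma le_div' a b c : 0 < c -> a <= b / c -> a * c <= b.
Proof. move=> hc h; have := Rmult_le_compat_r c _ _ (Rlt_le _ _ hc) h; rewrite /Rdiv Rmult_assoc Rinv_l; lra. Qed.

Lemma alpha_ex : exists al, forall (i l : nat), (0 < l)%nat ->
  INR (wsum x i l) - 1 <= INR l * al <= INR (wsum x i l) + 1.
Proof.
pose E r := exists (i l : nat), (0 < l)%nat /\ r = (INR (wsum x i l) - 1) / INR l.
have bE : bound E.
  exists 1 => r [i [l [hl ->]]].
  have hl' : 0 < INR l by exact: ((INR_ltP 0 l).1 hl).
  have hw : INR (wsum x i l) <= INR l by apply/INR_leP; apply: wsum_le.
  apply: div_le => //; lra.
have nE : exists r, E r by exists ((INR (wsum x 0 1) - 1) / INR 1), 0%nat, 1%nat.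
have [al [ub lub]] := @completeness E bE nE.
exists al => i l hl.
have hl' : 0 < INR l by exact: ((INR_ltP 0 l).1 hl).
split.
  have := ub _ (ex_intro _ i (ex_intro _ l (conj hl erefl))).
  move/(div_le' hl'); lra.
have : al <= (INR (wsum x i l) + 1) / INR l.
  apply: lub => r [i' [l' [hl2 ->]]].
  have hl2' : 0 < INR l' by exact: ((INR_ltP 0 l').1 hl2).
  have [b1 _] := block l' l i'.
  have [_ b2] := block l l' i.
  rewrite mulnC in b2.
  move/INR_leP: b1; move/INR_leP: b2; rewrite !INR_mul !INR_add /= => b2 b1.
  apply: div_le => //; rewrite /Rdiv Rmult_assoc (Rmult_comm (/ INR l)) -Rmult_assoc.
  apply: le_div => //; nra.
move/(le_div' hl'); lra.
Qed.


End Alpha.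

Section Phi.
Variable x : word.
Hypothesis bal : forall n i j, (wsum x i n <= wsum x j n + 1)%nat.
Hypothesis EPx : forall M P, (0 < P)%nat -> (forall i, (M <= i)%nat -> x (i + P)%nat = x i) -> False.
Variable al : R.
Open Scope R_scope.
Hypothesis hal : forall (i l : nat), (0 < l)%nat ->
  INR (wsum x i l) - 1 <= INR l * al <= INR (wsum x i l) + 1.

Open Scope R_scope.

Definition phi n := INR n * al - INR (hN x n).

Lemma phi_add i l : phi (i + l) - phi i = INR l * al - INR (wsum x i l).
Proof. rewrite /phi hN_add !INR_add; ring. Qed.

Lemma phi_step n : phi n.+1 = phi n + al - (if x n then 1 else 0).
Proof.
have h := phi_add n 1; rewrite addn1 /wsum big_ord1 addn0 INR_b in h.
by case: (x n) h => /= h; lra.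
Qed.

Lemma phi0 : phi 0 = 0.
Proof. rewrite /phi /hN wsum0 /=; ring. Qed.

Lemma phi_bound m n : Rabs (phi m - phi n) <= 1.
Proof.
wlog h : m n / (n <= m)%nat.
  move=> H; case: (leqP n m) => hc; first exact: H.
  rewrite Rabs_minus_sym; apply: H; exact: ltnW.
case: (eqVneq m n) => [->|ne]; first by rewrite Rminus_diag Rabs_R0; lra.
have -> : m = (n + (m - n))%nat by lia.
rewrite phi_add; have := hal n (l := m - n) ltac:(lia); move=> [h1 h2].
apply: Rabs_le; lra.
Qed.

Lemma al_ge0 : 0 <= al.
Proof.
apply: Rnot_lt_le => hlt.
have [l hl] := INR_unbounded (/ (- al)).
have hl0 : (0 < l)%nat.
  case: l hl => [|l] //= hl; have : 0 < / (- al) by apply: Rinv_0_lt_compat; lra.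
  lra.
have [h1 _] := hal 0 hl0.
have hw : 0 <= INR (wsum x 0 l) by apply: pos_INR.
have : INR l * (- al) > 1.
  have : / (- al) * (- al) = 1 by field; lra.
  nra.
lra.
Qed.

Lemma al_le1 : al <= 1.
Proof.
apply: Rnot_lt_le => hlt.
have [l hl] := INR_unbounded (/ (al - 1)).
have hl0 : (0 < l)%nat.
  case: l hl => [|l] //= hl; have : 0 < / (al - 1) by apply: Rinv_0_lt_compat; lra.
  lra.
have [_ h2] := hal 0 hl0.
have hw : INR (wsum x 0 l) <= INR l by apply/INR_leP; apply: wsum_le.
have : INR l * (al - 1) > 1.
  have : / (al - 1) * (al - 1) = 1 by field; lra.
  nra.
lra.
Qed.

Lemma sum_lower q N : INR (\sum_(r < q) wsum x r N) >= INR q * (INR N * al - 1).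
Proof.
case: (posnP N) => [->|hN0].
  rewrite /= Rmult_0_l; have := pos_INR (\sum_(r < q) wsum x r 0); have := pos_INR q.
  have -> : (\sum_(r < q) wsum x r 0 = 0)%nat by apply: big1 => r _; rewrite wsum0.
  move=> /= *; nra.
elim: q => [|q IH]; first by rewrite big_ord0 /=; lra.
rewrite S_INR big_ord_recr /= INR_add.
have [_ h2] := hal q hN0.
have key : forall S a q T, S >= q*(T-1) -> T <= a + 1 -> S + a >= (q+1)*(T-1) by move=> *; nra.
exact: key.
Qed.

Lemma sum_upper q N : INR (\sum_(r < q) wsum x r N) <= INR q * (INR N * al + 1).
Proof.
case: (posnP N) => [->|hN0].
  rewrite /= Rmult_0_l; have := pos_INR (\sum_(r < q) wsum x r 0); have := pos_INR q.
  have -> : (\sum_(r < q) wsum x r 0 = 0)%nat by apply: big1 => r _; rewrite wsum0.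
  move=> /= *; nra.
elim: q => [|q IH]; first by rewrite big_ord0 /=; lra.
rewrite S_INR big_ord_recr /= INR_add.
have [h1 _] := hal q hN0.
have key : forall S a q T, S <= q*(T+1) -> a - 1 <= T -> S + a <= (q+1)*(T+1) by move=> *; nra.
exact: key.
Qed.

Lemma sum_exch q N : (\sum_(i < N) wsum x i q = \sum_(r < q) wsum x r N)%nat.
Proof.
rewrite /wsum exchange_big /=; apply: eq_bigr => r _; apply: eq_bigr => i _.
by rewrite addnC.
Qed.


Lemma sumc N P : (\sum_(i < N) P = N * P)%nat.
Proof. elim: N => [|N IH]; first by rewrite big_ord0. by rewrite big_ord_recr IH mulSn addnC. Qed.

Lemma const_window_false q P M : (0 < q)%nat -> (forall i, (M <= i)%nat -> wsum x i q = P) -> False.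
Proof.
move=> hq h; apply: (EPx (M := M) hq) => i hi.
have e1 := wsumS x i q; rewrite wsumS' (h i hi) (h i.+1 (leqW hi)) in e1.
by move: e1; case: (x i); case: (x (i + q)%nat) => //=; lia.
Qed.

Lemma irr q P : (0 < q)%nat -> INR q * al <> INR P.
Proof.
move=> hq e.
have hW : forall i, (wsum x i q <= P + 1)%nat /\ (P <= wsum x i q + 1)%nat.
  move=> i; have [h1 h2] := hal i hq; rewrite e in h1 h2; split; apply/INR_leP; rewrite INR_add /=; lra.
case: (classic (forall i, (wsum x i q <= P)%nat)) => [hle|].
  pose G N := (\sum_(i < N) (P - wsum x i q))%nat.
  have mono : forall N, (G N <= G N.+1)%nat by move=> N; rewrite /G big_ord_recr /=; lia.
  have bnd : forall N, (G N <= G 0 + q)%nat.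
    move=> N; rewrite /G big_ord0 add0n.
    have s1 : (\sum_(i < N) (P - wsum x i q) + \sum_(i < N) wsum x i q = N * P)%nat.
      rewrite -big_split /= -sumc; apply: eq_bigr => i _; rewrite subnK //.
    rewrite sum_exch in s1.
    have s2 := sum_lower q N.
    apply/INR_leP; move: s1 => /(f_equal INR); rewrite INR_add INR_mul => s1.
    have key : forall g s n p qq, g + s = n * p -> s >= qq * (n * al - 1) -> qq * al = p -> g <= qq.
      move=> g s n p qq h1 h2 h3; nra.
    exact: key s1 s2 e.
  have [M hM] := evconst mono bnd.
  apply: (const_window_false (P := P) (M := M) hq) => i hi.
  have := hM i.+1 (leqW hi); rewrite -(hM i hi) /G big_ord_recr /=.
  have := hle i; lia.
move=> /not_all_ex_not [i0 hi0].
have hge : forall i, (P <= wsum x i q)%nat.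
  move=> i; have := bal q i0 i; have := hW i; lia.
pose G N := (\sum_(i < N) (wsum x i q - P))%nat.
have mono : forall N, (G N <= G N.+1)%nat by move=> N; rewrite /G big_ord_recr /=; lia.
have bnd : forall N, (G N <= G 0 + q)%nat.
  move=> N; rewrite /G big_ord0 add0n.
  have s1 : (\sum_(i < N) (wsum x i q - P) + N * P = \sum_(i < N) wsum x i q)%nat.
    rewrite -sumc -big_split /=; apply: eq_bigr => i _; rewrite subnK //.
  rewrite sum_exch in s1.
  have s2 := sum_upper q N.
  apply/INR_leP; move: s1 => /(f_equal INR); rewrite INR_add INR_mul => s1.
  have key : forall g s n p qq, g + n * p = s -> s <= qq * (n * al + 1) -> qq * al = p -> g <= qq.
    move=> g s n p qq h1 h2 h3; nra.
  exact: key s1 s2 e.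
have [M hM] := evconst mono bnd.
apply: (const_window_false (P := P) (M := M) hq) => i hi.
have := hM i.+1 (leqW hi); rewrite -(hM i hi) /G big_ord_recr /=.
have := hge i; lia.
Qed.

End Phi.

From mathcomp Require Import all_boot zify.
From Stdlib Require Import Classical ClassicalEpsilon Reals Lra ZArith.

Lemma abs_le r b : (Rabs r <= b -> -b <= r <= b)%R.
Proof. move=> h; have := Rle_abs r; have := Rle_abs (- r); rewrite Rabs_Ropp; lra. Qed.
Lemma abs_lt r b : (Rabs r < b -> -b < r < b)%R.
Proof. move=> h; have := Rle_abs r; have := Rle_abs (- r); rewrite Rabs_Ropp; lra. Qed.
Lemma abs_intro r b : (-b < r < b -> Rabs r < b)%R.
Proof. move=> [h1 h2]; apply: Rabs_def1; lra. Qed.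

Section Geo.
Variable x : word.
Hypothesis bal : forall n i j, (wsum x i n <= wsum x j n + 1)%nat.
Hypothesis EPx : forall M P, (0 < P)%nat -> (forall i, (M <= i)%nat -> x (i + P)%nat = x i) -> False.
Variable al : R.
Open Scope R_scope.
Hypothesis hal : forall (i l : nat), (0 < l)%nat ->
  INR (wsum x i l) - 1 <= INR l * al <= INR (wsum x i l) + 1.

Local Notation phi := (phi x al).
Local Notation irr := (irr bal EPx hal).

Lemma al_pos : 0 < al.
Proof.
have := al_ge0 hal; have := irr (q := 1) (P := 0) isT; rewrite /= Rmult_1_l; lra.
Qed.

Lemma al_lt1 : al < 1.
Proof.
have := al_le1 hal; have := irr (q := 1) (P := 1) isT; rewrite /= Rmult_1_l; lra.
Qed.

Lemma phi_sub n l : phi (n + l)%nat - phi n = INR l * al - INR (wsum x n l).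
Proof. exact: phi_add. Qed.

Lemma phi_neq_lt n m : (n < m)%nat -> phi m <> phi n.
Proof.
move=> h e.
have := phi_sub n (m - n); rewrite subnKC ?(ltnW h) // e Rminus_diag => e2.
apply: (irr (q := m - n) (P := wsum x n (m - n))); first lia.
lra.
Qed.

Lemma phi_neq m n : m <> n -> phi m <> phi n.
Proof.
move=> ne; case: (ltngtP n m) => c; first exact: phi_neq_lt.
  by move=> e; apply: (phi_neq_lt c).
by exfalso; apply: ne.
Qed.

Lemma phi_strict_lt n m : (n < m)%nat -> Rabs (phi m - phi n) < 1.
Proof.
move=> h.
have hb := phi_bound hal m n.
have e0 := phi_sub n (m - n); rewrite subnKC ?(ltnW h) // in e0.
have hq : (0 < m - n)%nat by lia.
case: (Rle_lt_or_eq_dec _ _ hb) => // e1.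
exfalso; move: e1; case: (Rcase_abs (phi m - phi n)) => h2;
  [rewrite Rabs_left // => e1 | rewrite Rabs_right // => e1]; last first.
  apply: (irr (q := m - n) (P := (wsum x n (m - n)).+1) hq); rewrite S_INR; lra.
case: (posnP (wsum x n (m - n))) => hw.
  rewrite hw /= in e0; have := pos_INR (m - n); have := al_pos; nra.
apply: (irr (q := m - n) (P := (wsum x n (m - n)).-1) hq).
have := S_INR (wsum x n (m - n)).-1; rewrite prednK // => e3; lra.
Qed.

Lemma phi_strict m n : m <> n -> Rabs (phi m - phi n) < 1.
Proof.
move=> ne; case: (ltngtP n m) => c; first exact: phi_strict_lt.
  by rewrite Rabs_minus_sym; apply: phi_strict_lt.
by exfalso; apply: ne.
Qed.

Lemma supinf : exists t s, (forall n, s <= phi n <= t) /\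
  (forall e, 0 < e -> exists n, t - e < phi n) /\
  (forall e, 0 < e -> exists n, phi n < s + e) /\ t - 1 <= s.
Proof.
have hb : forall n, Rabs (phi n) <= 1.
  by move=> n; have := phi_bound hal n 0; rewrite (phi0 x al) Rminus_0_r.
pose E1 r := exists n, r = phi n.
pose E2 r := exists n, r = - phi n.
have b1 : bound E1 by exists 1 => r [n ->]; have := hb n; move/abs_le; lra.
have b2 : bound E2 by exists 1 => r [n ->]; have := hb n; move/abs_le; lra.
have n1 : exists r, E1 r by exists (phi 0), 0%nat.
have n2 : exists r, E2 r by exists (- phi 0), 0%nat.
have [t [ub1 lub1]] := @completeness E1 b1 n1.
have [ms [ub2 lub2]] := @completeness E2 b2 n2.
exists t, (- ms); split; [|split; [|split]].
- move=> n; split.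
    have := ub2 _ (ex_intro _ n erefl); lra.
  exact: ub1 _ (ex_intro _ n erefl).
- move=> e he; apply: NNPP => hne.
  have : t <= t - e; last lra.
  apply: lub1 => r [n ->]; apply: Rnot_lt_le => hh; apply: hne; exists n; lra.
- move=> e he; apply: NNPP => hne.
  have : ms <= ms - e; last lra.
  apply: lub2 => r [n ->]; apply: Rnot_lt_le => hh; apply: hne; exists n; lra.
- have : ms <= 1 - t; last lra.
  apply: lub2 => r [n ->].
  have : t <= phi n + 1; last lra.
  apply: lub1 => r' [m ->]; have := phi_bound hal m n; move/abs_le; lra.
Qed.


Definition fl r := (up r - 1)%Z.
Lemma fl_spec r : IZR (fl r) <= r < IZR (fl r) + 1.
Proof. have [h1 h2] := archimed r; rewrite /fl minus_IZR; lra. Qed.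

Lemma INR_toNat z : (0 <= z)%Z -> INR (Z.to_nat z) = IZR z.
Proof. by move=> h; rewrite INR_IZR_INZ Z2Nat.id. Qed.

Lemma IZR_lt1 z : -1 < IZR z -> (0 <= z)%Z.
Proof. move=> h; have : (-1 < z)%Z by apply: lt_IZR. lia. Qed.

Lemma small_theta e : 0 < e -> exists g c, (0 < g)%nat /\ 0 < Rabs (INR g * al - IZR c) < e.
Proof.
move=> he; have [N [hN1 hN2]] := archimed_cor1 e he.
have hN : 0 < INR N by apply: lt_0_INR.
pose fr i := INR i * al - IZR (fl (INR i * al)).
have hfr : forall i, 0 <= fr i < 1 by move=> i; have := fl_spec (INR i * al); rewrite /fr; lra.
pose bin i := Z.to_nat (fl (INR N * fr i)).
have hfl : forall i, (0 <= fl (INR N * fr i) < Z.of_nat N)%Z.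
  move=> i; have := fl_spec (INR N * fr i); have := hfr i => hf hs.
  split; first by apply: IZR_lt1; nra.
  apply: lt_IZR; rewrite -INR_IZR_INZ; nra.
have hbin : forall i, (i <= N)%nat -> (bin i < N)%nat by move=> i _; have := hfl i; rewrite /bin; lia.
have [i [i' [hii e1]]] := pigeon hbin.
have e2 : fl (INR N * fr i) = fl (INR N * fr i') by move: e1; rewrite /bin; have := hfl i; have := hfl i'; lia.
have d1 : Rabs (fr i' - fr i) < / INR N.
  have := fl_spec (INR N * fr i); have := fl_spec (INR N * fr i'); rewrite e2 => h1 h2.
  apply: abs_intro.
  have : Rabs (INR N * (fr i' - fr i)) < 1 by apply: abs_intro; lra.
  rewrite Rabs_mult Rabs_right; last lra.
  move=> h; have : Rabs (fr i' - fr i) < / INR N * 1.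
    by apply: (Rmult_lt_reg_l (INR N)) => //; rewrite -Rmult_assoc Rinv_r; lra.
  rewrite Rmult_1_r => h'; have := abs_lt h'; lra.
exists (i' - i)%nat, (fl (INR i' * al) - fl (INR i * al))%Z.
have gi : INR (i' - i) = INR i' - INR i by rewrite -{2}(subnKC (ltnW (proj1 (andP hii)))) INR_add; ring.
have eq1 : INR (i' - i) * al - IZR (fl (INR i' * al) - fl (INR i * al)) = fr i' - fr i.
  by rewrite gi minus_IZR /fr; ring.
split; first lia.
rewrite eq1; split; last lra.
apply: Rabs_pos_lt => h0.
have eq2 : INR (i' - i) * al = IZR (fl (INR i' * al) - fl (INR i * al)) by lra.
have hpos : 0 < INR (i' - i) * al.
  apply: Rmult_lt_0_compat; last exact: al_pos.
  apply: lt_0_INR; apply/ltP; lia.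
have hc : (0 <= fl (INR i' * al) - fl (INR i * al))%Z by apply: IZR_lt1; lra.
apply: (irr (q := i' - i) (P := Z.to_nat (fl (INR i' * al) - fl (INR i * al)))); first lia.
by rewrite INR_toNat.
Qed.

Lemma phi_jump a g k c : exists zz : Z,
  phi (a + g * k)%nat = phi a + INR k * (INR g * al - IZR c) + IZR zz.
Proof.
exists (Z.of_nat k * c - Z.of_nat (wsum x a (g * k)))%Z.
have := phi_sub a (g * k); rewrite INR_mul minus_IZR mult_IZR -!INR_IZR_INZ => h.
lra.
Qed.

Lemma dens e : 0 < e -> exists L, forall a y, exists j, (j <= L)%nat /\
  exists z : Z, Rabs (phi (a + j)%nat - y - IZR z) < e.
Proof.
move=> he; have [g [c [hg [ht1 ht2]]]] := small_theta he.
set th := INR g * al - IZR c in ht1 ht2.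
pose K0 := (Z.to_nat (up (/ Rabs th)) + 1)%nat.
have hK0 : / Rabs th + 1 < INR K0.
  have [h1 _] := archimed (/ Rabs th).
  have hp : 0 < / Rabs th by apply: Rinv_0_lt_compat.
  rewrite /K0 INR_add INR_toNat /=; first lra.
  by apply: IZR_lt1; lra.
exists (g * K0)%nat => a y.
set u := y - phi a.
set v := u - IZR (fl u).
have hv : 0 <= v < 1 by have := fl_spec u; rewrite /v; lra.
case: (Rlt_or_le 0 th) => hth.
  have rth : Rabs th = th by rewrite Rabs_right; lra.
  set r := v / th.
  have hr : 0 <= r by apply: Rmult_le_pos; [lra | left; apply: Rinv_0_lt_compat].
  have hr1 : r < / th by rewrite /r /Rdiv -{2}(Rmult_1_l (/ th)); apply: Rmult_lt_compat_r; [apply: Rinv_0_lt_compat | ]; lra.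
  have [hu1 hu2] := archimed r.
  have hkz : (0 <= up r)%Z by apply: IZR_lt1; lra.
  set k := Z.to_nat (up r).
  have hk : INR k = IZR (up r) by rewrite /k INR_toNat.
  have hk1 : INR k * th > v.
    have : IZR (up r) * th > r * th by apply: Rmult_gt_compat_r.
    by rewrite /r /Rdiv Rmult_assoc Rinv_l ?Rmult_1_r -?hk; lra.
  have hk2 : INR k * th <= v + th.
    have : IZR (up r) * th <= (r + 1) * th by apply: Rmult_le_compat_r; lra.
    by rewrite Rmult_plus_distr_r /r /Rdiv Rmult_assoc Rinv_l ?Rmult_1_r ?Rmult_1_l -?hk; lra.
  exists (g * k)%nat; split.
    apply: leq_mul => //; apply/INR_leP; rewrite rth in hK0; lra.
  have [zz hzz] := phi_jump a g k c.
  exists (zz - fl u)%Z; rewrite hzz minus_IZR -/th.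
  apply: abs_intro; move: hk1 hk2; rewrite /v /u => hk1 hk2; lra.
have hth' : th < 0 by case: (Rle_lt_or_eq_dec _ _ hth) => // e0; rewrite e0 Rabs_R0 in ht1; lra.
have rth : Rabs th = - th by rewrite Rabs_left.
set r := (1 - v) / (- th).
have hth2 : 0 < - th by lra.
have hr : 0 <= r by apply: Rmult_le_pos; [lra | left; apply: Rinv_0_lt_compat].
have hr1 : r <= / (- th).
  rewrite /r /Rdiv; rewrite -{2}(Rmult_1_l (/ - th)); apply: Rmult_le_compat_r; [left; apply: Rinv_0_lt_compat|]; lra.
have [hu1 hu2] := archimed r.
have hkz : (0 <= up r)%Z by apply: IZR_lt1; lra.
set k := Z.to_nat (up r).
have hk : INR k = IZR (up r) by rewrite /k INR_toNat.
have hk1 : INR k * (- th) > 1 - v.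
  have : IZR (up r) * (- th) > r * (- th) by apply: Rmult_gt_compat_r.
  by rewrite /r /Rdiv Rmult_assoc Rinv_l ?Rmult_1_r -?hk; lra.
have hk2 : INR k * (- th) <= 1 - v - th.
  have : IZR (up r) * (- th) <= (r + 1) * (- th) by apply: Rmult_le_compat_r; lra.
  by rewrite Rmult_plus_distr_r /r /Rdiv Rmult_assoc Rinv_l ?Rmult_1_r ?Rmult_1_l -?hk; lra.
exists (g * k)%nat; split.
  apply: leq_mul => //; apply/INR_leP; rewrite rth in hK0; lra.
have [zz hzz] := phi_jump a g k c.
exists (zz - fl u - 1)%Z; rewrite hzz 2!minus_IZR -/th.
apply: abs_intro; move: hk1 hk2; rewrite /v /u => hk1 hk2; lra.
Qed.

End Geo.

From mathcomp Require Import all_boot zify.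
From Stdlib Require Import Classical ClassicalEpsilon Reals Lra ZArith.

Section Final.
Variable x : word.
Hypothesis bal : forall n i j, (wsum x i n <= wsum x j n + 1)%nat.
Hypothesis EPx : forall M P, (0 < P)%nat -> (forall i, (M <= i)%nat -> x (i + P)%nat = x i) -> False.
Variable al : R.
Open Scope R_scope.
Hypothesis hal : forall (i l : nat), (0 < l)%nat ->
  INR (wsum x i l) - 1 <= INR l * al <= INR (wsum x i l) + 1.
Local Notation phi := (phi x al).
Variables t s : R.
Hypothesis hst : forall n, s <= phi n <= t.
Hypothesis ht : forall e, 0 < e -> exists n, t - e < phi n.
Hypothesis hs : forall e, 0 < e -> exists n, phi n < s + e.
Hypothesis hts : t - 1 <= s.

Lemma coding0 n : phi n < t - al -> x n = false.
Proof.
move=> h; case hx: (x n) => //.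
have := phi_step x al n; rewrite hx => e; have := hst n.+1; lra.
Qed.

Lemma coding1 n : phi n > t - al -> x n = true.
Proof.
move=> h; case hx: (x n) => //.
have := phi_step x al n; rewrite hx => e; have := hst n.+1; lra.
Qed.

Lemma N1 d : 0 < d -> exists L, forall a,
  (exists j, (j <= L)%nat /\ t - d < phi (a + j)%nat) /\
  (exists j, (j <= L)%nat /\ phi (a + j)%nat < s + d).
Proof.
move=> hd; set d' := Rmin d (1/2).
have hd' : 0 < d' by apply: Rmin_pos; lra.
have hd1 : d' <= d by apply: Rmin_l.
have hd2 : d' <= 1/2 by apply: Rmin_r.
have [L hL] := dens bal EPx hal (e := d' / 2) ltac:(lra).
exists L => a; split.
  have [j [hj [z hz]]] := hL a (t - d' / 2).
  exists j; split => //.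
  have := abs_lt hz; have := hst (a + j)%nat => hp hz'.
  have : (z <= -1 \/ z = 0 \/ 1 <= z)%Z by lia.
  case=> [hz1|[hz1|hz1]].
  - have := IZR_le _ _ hz1; lra.
  - rewrite hz1 in hz'; lra.
  - have := IZR_le _ _ hz1; lra.
have [j [hj [z hz]]] := hL a (s + d' / 2).
exists j; split => //.
have := abs_lt hz; have := hst (a + j)%nat => hp hz'.
have : (z <= -1 \/ z = 0 \/ 1 <= z)%Z by lia.
case=> [hz1|[hz1|hz1]].
- have := IZR_le _ _ hz1; lra.
- rewrite hz1 in hz'; lra.
- have := IZR_le _ _ hz1; lra.
Qed.

Lemma ts_eq : t = s + 1.
Proof.
apply: Rle_antisym; first lra.
apply: Rnot_lt_le => hlt.
set e := s + 1 - t.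
have he : 0 < e by rewrite /e; lra.
have [L hL] := dens bal EPx hal (e := e / 2) ltac:(lra).
have [j [_ [z hz]]] := hL 0%nat (s - e / 2).
have := abs_lt hz; have := hst (0 + j)%nat => hp hz'.
have : (z <= 0 \/ 1 <= z)%Z by lia.
case=> hz1; have := IZR_le _ _ hz1; rewrite /e in hz' *; lra.
Qed.

Lemma agree_phi a b L : factor x a L = factor x b L ->
  forall j, (j <= L)%nat -> phi (b + j)%nat - phi (a + j)%nat = phi b - phi a.
Proof.
move/factorP => h; elim=> [|j IH] hj; first by rewrite !addn0.
rewrite !addnS !phi_step //; have := h j hj => e; rewrite e.
have := IH (ltnW hj); lra.
Qed.

Lemma cyl a K : (forall k, (k < K)%nat -> phi (a + k)%nat <> t - al) ->
  exists eta, 0 < eta /\ forall b, Rabs (phi a - phi b) < eta -> factor x a K = factor x b K.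
Proof.
elim: K => [|K IH] hK.
  by exists 1; split; [lra | move=> b _; rewrite /factor].
have [eta0 [he0 H0]] := IH (fun k hk => hK k (ltnW hk)).
have hne := hK K (ltnSn K).
set m0 := Rabs (phi (a + K)%nat - (t - al)).
have hm0 : 0 < m0 by apply: Rabs_pos_lt; lra.
exists (Rmin eta0 m0); split; first by apply: Rmin_pos.
move=> b hb.
have hb0 : Rabs (phi a - phi b) < eta0 by apply: (Rlt_le_trans _ _ _ hb); apply: Rmin_l.
have hb1 : Rabs (phi a - phi b) < m0 by apply: (Rlt_le_trans _ _ _ hb); apply: Rmin_r.
have e1 := H0 b hb0.
have e2 := agree_phi e1 (leqnn K).
rewrite !factorS e1; congr rcons.
have := abs_lt hb1; rewrite /m0 => hb2.
case: (Rlt_or_le (phi (a + K)%nat) (t - al)) => hc.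
  rewrite Rabs_left in hb2; last lra.
  by rewrite !coding0 //; lra.
rewrite Rabs_right in hb2; last lra.
have hc' : phi (a + K)%nat > t - al by lra.
by rewrite !coding1 //; lra.
Qed.

Lemma char_of m n k : x m <> x n -> factor x m.+1 k = factor x n.+1 k ->
  leftSpecial x (factor x m.+1 k).
Proof.
move=> ne e.
have f1 : isFactor x (x m :: factor x m.+1 k) by exists m; rewrite /= size_factor factorS'.
have f2 : isFactor x (x n :: factor x m.+1 k) by exists n; rewrite /= size_factor factorS' e.
by move: f1 f2 ne; case: (x m); case: (x n) => // f1 f2 _; split.
Qed.

Lemma sing_false m : nonsingular x -> (forall k', phi (m.+1 + k')%nat <> t - al) ->
  (forall eta, 0 < eta -> exists n, x m <> x n /\ Rabs (phi m.+1 - phi n.+1) < eta) -> False.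
Proof.
move=> ns hmarg hclose.
pose c := fun i => x (m.+1 + i)%nat.
have fc : forall k, factor c 0 k = factor x m.+1 k by move=> k0; apply/factorP => i _.
have hc : characteristic x c.
  split.
    by move=> k0; exists m.+1; rewrite fc size_factor.
  move=> k0; rewrite fc.
  have [eta [he H]] := cyl (a := m.+1) (K := k0) (fun k' _ => hmarg k').
  have [n [ne hn]] := hclose _ he.
  exact: (char_of ne (H _ hn)).
have [m' hm'] := ns c hc m.+1 isT.
by apply: hm'; rewrite /c addSn.
Qed.

Lemma F4 : nonsingular x -> forall m, s < phi m < t.
Proof.
move=> ns m.
have tse := ts_eq.
have ha := al_pos bal EPx hal; have ha1 := al_lt1 bal EPx hal.
have hp := hst m.
split.
- case: (Rle_lt_or_eq_dec _ _ (proj1 hp)) => // e; exfalso.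
  have xm : x m = false by apply: coding0; lra.
  have pm1 : phi m.+1 = s + al by rewrite phi_step xm; lra.
  apply: (sing_false ns (m := m)).
    move=> k' e1; have := phi_step x al (m.+1 + k'); rewrite e1.
    case: (x _) => e2.
      apply: (phi_neq bal EPx hal (m := (m.+1 + k').+1) (n := m)); first lia.
      rewrite e2; lra.
    have := phi_strict bal EPx hal (m := (m.+1 + k').+1) (n := m) ltac:(lia).
    rewrite e2 -e tse; have -> : s + 1 - al + al - 0 - s = 1 by ring.
    rewrite Rabs_R1; lra.
  move=> eta he.
  have [n hn] := ht (e := Rmin eta al) (Rmin_pos _ _ he ha).
  have h1 := Rmin_l eta al; have h2 := Rmin_r eta al.
  have xn : x n = true by apply: coding1; lra.
  exists n; split; first by rewrite xm xn.
  rewrite pm1 phi_step xn; apply: abs_intro; have := hst n; lra.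
- case: (Rle_lt_or_eq_dec _ _ (proj2 hp)) => // e; exfalso.
  have xm : x m = true by apply: coding1; rewrite e; lra.
  have pm1 : phi m.+1 = s + al by rewrite phi_step xm e; lra.
  apply: (sing_false ns (m := m)).
    move=> k' e1; have := phi_step x al (m.+1 + k'); rewrite e1.
    case: (x _) => e2.
      have := phi_strict bal EPx hal (m := (m.+1 + k').+1) (n := m) ltac:(lia).
      rewrite e2 e; have -> : t - al + al - 1 - t = -1 by ring.
      rewrite Rabs_Ropp Rabs_R1; lra.
    apply: (phi_neq bal EPx hal (m := (m.+1 + k').+1) (n := m)); first lia.
    rewrite e2 e; lra.
  move=> eta he.
  have ha2 : 0 < 1 - al by lra.
  have [n hn] := hs (e := Rmin eta (1 - al)) (Rmin_pos _ _ he ha2).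
  have h1 := Rmin_l eta (1 - al); have h2 := Rmin_r eta (1 - al).
  have xn : x n = false by apply: coding0; lra.
  exists n; split; first by rewrite xm xn.
  rewrite pm1 phi_step xn; apply: abs_intro; have := hst n; lra.
Qed.

Lemma delta_ex : nonsingular x -> forall k, exists d : R, (0 < d) /\ (forall i, (i <= k)%nat -> (s + d <= phi i) /\ (phi i <= t - d)).
Proof.
move=> ns; elim=> [|k [d [hd H]]].
  have := F4 ns 0; move=> [h1 h2].
  exists (Rmin (phi 0 - s) (t - phi 0)); split; first by apply: Rmin_pos; lra.
  move=> i; rewrite leqn0 => /eqP ->.
  have := Rmin_l (phi 0 - s) (t - phi 0); have := Rmin_r (phi 0 - s) (t - phi 0); lra.
have := F4 ns k.+1; move=> [h1 h2].
set d1 := Rmin (phi k.+1 - s) (t - phi k.+1).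
have hd1 : 0 < d1 by apply: Rmin_pos; lra.
exists (Rmin d d1); split; first by apply: Rmin_pos.
have m1 := Rmin_l d d1; have m2 := Rmin_r d d1.
move=> i; rewrite leq_eqVlt => /orP [/eqP ->|hi].
  have := Rmin_l (phi k.+1 - s) (t - phi k.+1); have := Rmin_r (phi k.+1 - s) (t - phi k.+1).
  rewrite -/d1; lra.
have := H i hi; lra.
Qed.

Lemma Pprop : nonsingular x -> forall k, exists L, forall L', (L <= L')%nat ->
  forall a b, (a < b)%nat -> factor x a L' = factor x b L' -> factor x (b - a) k = factor x 0 k.
Proof.
move=> ns k.
have [d [hd Hd]] := delta_ex ns k.
have [L HL] := N1 hd.
exists L => L' hL a b hab e.
set dd := (b - a)%nat.
have hdd : (0 < dd)%nat by rewrite /dd; lia.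
set D := phi b - phi a.
have agr := agree_phi e.
have hD : D = INR dd * al - INR (wsum x a dd).
  by rewrite /D -(phi_add x al a dd) /dd subnKC // ltnW.
have hE : forall i, (i <= k)%nat -> phi (dd + i)%nat - phi i = D.
  move=> i hi.
  have eE : phi (dd + i)%nat - phi i = INR dd * al - INR (wsum x i dd) by rewrite addnC phi_add.
  have [Hd1 Hd2] := Hd i hi.
  have hst1 := hst (dd + i)%nat.
  case: (ltngtP (wsum x a dd) (wsum x i dd)) => c.
  - have c' : INR (wsum x a dd) + 1 <= INR (wsum x i dd).
      by rewrite -S_INR; apply/INR_leP.
    have [[j [hj hj']] _] := HL a.
    have := agr j (leq_trans hj hL); rewrite -/D => eD.
    have := hst (b + j)%nat; lra.
  - have c' : INR (wsum x i dd) + 1 <= INR (wsum x a dd).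
      by rewrite -S_INR; apply/INR_leP.
    have [_ [j [hj hj']]] := HL a.
    have := agr j (leq_trans hj hL); rewrite -/D => eD.
    have := hst (b + j)%nat; lra.
  - by rewrite eE hD c.
apply/factorP => i hi.
have e1 := hE i (ltnW hi); have e2 := hE i.+1 hi.
rewrite addnS !phi_step in e2.
move: e2; rewrite add0n; case: (x (dd + i)%nat); case: (x i) => //= e2; lra.
Qed.

End Final.

From mathcomp Require Import all_boot zify.
From Stdlib Require Import Classical ClassicalEpsilon.

Lemma Pw w : sturmian w -> nonsingular w -> forall k, exists L, forall L', L <= L' ->
  forall a b, a < b -> factor w a L' = factor w b L' -> factor w (b - a) k = factor w 0 k.
Proof.
move=> sw ns k.
have bal := balanced sw.
have EPx := EP sw.
have [al hal] := alpha_ex bal.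
have [t [s [hst [ht [hs hts]]]]] := supinf hal.
exact: (Pprop bal EPx hal hst ht hs hts ns k).
Qed.

Lemma enc_inj L a b a' b' : b < L.+1 -> b' < L.+1 -> a * L.+1 + b = a' * L.+1 + b' -> a = a' /\ b = b'.
Proof.
move=> hb hb' e.
have e1 : (a * L.+1 + b) %% L.+1 = (a' * L.+1 + b') %% L.+1 by rewrite e.
have e2 : (a * L.+1 + b) %/ L.+1 = (a' * L.+1 + b') %/ L.+1 by rewrite e.
rewrite !modnMDl !modn_small // in e1.
by rewrite !divnMDl // !divn_small // !addn0 in e2.
Qed.

Lemma IPstar_main w w' k k' : sturmian w -> sturmian w' -> nonsingular w -> nonsingular w' ->
  IPstar (fun n => occ w (factor w 0 k) n /\ occ w' (factor w' 0 k') n).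
Proof.
move=> sw sw' ns ns' B [xs [inc HB]].
have [L1 H1] := Pw sw ns k.
have [L2 H2] := Pw sw' ns' k'.
set L := L1 + L2.
have [s1 [_ [sz1 [hs1 _]]]] := sturm_list L sw.
have [s2 [_ [sz2 [hs2 _]]]] := sturm_list L sw'.
pose S j := \sum_(i < j) xs i.+1.
pose col j := index (factor w (S j) L) s1 * L.+1 + index (factor w' (S j) L) s2.
have hi1 : forall j, index (factor w (S j) L) s1 < L.+1 by move=> j; rewrite -sz1 index_mem.
have hi2 : forall j, index (factor w' (S j) L) s2 < L.+1 by move=> j; rewrite -sz2 index_mem.
have hcol : forall j, j <= L.+1 * L.+1 -> col j < L.+1 * L.+1.
  move=> j _; rewrite /col; have := hi1 j; have := hi2 j; nia.
have [j [l [hjl e]]] := pigeon hcol.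
have [e1 e2] := enc_inj (hi2 j) (hi2 l) e.
have f1 : factor w (S j) L = factor w (S l) L.
  by rewrite -(nth_index [::] (hs1 (S j))) -(nth_index [::] (hs1 (S l))) e1.
have f2 : factor w' (S j) L = factor w' (S l) L.
  by rewrite -(nth_index [::] (hs2 (S j))) -(nth_index [::] (hs2 (S l))) e2.
have xpos : forall i, 0 < xs i.+1 by move=> i; have := inc i; lia.
have Ssum : forall d, S (j + d) = S j + \sum_(i <- iota j.+1 d) xs i.
  elim=> [|d IH]; first by rewrite addn0 big_nil addn0.
  have -> : S (j + d.+1) = S (j + d) + xs (j + d).+1 by rewrite addnS /S big_ord_recr.
  rewrite IH; have -> : iota j.+1 d.+1 = iota j.+1 d ++ [:: j.+1 + d] by rewrite -[d.+1]addn1 iotaD.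
  by rewrite big_cat big_seq1 addnA addSn.
have hl : l = j + (l - j) by lia.
have hab : S j < S l.
  rewrite hl Ssum -{1}(addn0 (S j)) ltn_add2l.
  case: (l - j) (ltac:(lia) : 0 < l - j) => // d _.
  by rewrite /= big_cons; have := xpos j; lia.
exists (S l - S j); split.
  split.
  - rewrite /occ size_factor; apply: (H1 L) => //; rewrite /L; lia.
  - rewrite /occ size_factor; apply: (H2 L) => //; rewrite /L; lia.
have -> : S l - S j = \sum_(i <- iota j.+1 (l - j)) xs i by rewrite {1}hl Ssum; lia.
apply: HB; last exact: iota_uniq.
by case: (l - j) (ltac:(lia) : 0 < l - j).
Qed.

Section GG.
Variable p : ufilter.
Hypothesis hu : ultrafilter p.
Hypothesis hnp : nonprincipal p.
Hypothesis hid : forall A, uadd p p A <-> p A.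

Lemma pmono A B : (forall n, A n -> B n) -> p A -> p B.
Proof. by case: hu => _ [_ [h _]]; apply: h. Qed.
Lemma pI A B : p A -> p B -> p (fun n => A n /\ B n).
Proof. by case: hu => _ [_ [_ [h _]]]; apply: h. Qed.
Lemma pU A : p A \/ p (fun n => ~ A n).
Proof. by case: hu => _ [_ [_ [_ h]]]; apply: h. Qed.
Lemma pF : ~ p (fun _ => False).
Proof. by case: hu => _ [h _]. Qed.

Lemma pnle M : ~ p (fun n => n <= M).
Proof.
elim: M => [|M IH] h.
  by apply: (@hnp 0); apply: (pmono _ h) => n; rewrite leqn0 => /eqP.
case: (pU (fun n => n <= M)) => h2; first exact: IH.
apply: (@hnp M.+1); apply: (pmono _ (pI h h2)) => n [h3 h4]; apply/eqP; rewrite eqn_leq h3 /=; lia.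
Qed.

Lemma pgt M : p (fun n => M < n).
Proof.
case: (pU (fun n => n <= M)) => h; first by exfalso; apply: (pnle h).
by apply: (pmono _ h) => n; rewrite ltnNge => /negP.
Qed.

Definition star (A : nat -> Prop) n := A n /\ p (fun m => A (m + n)).

Lemma star_p A : p A -> p (star A).
Proof.
move=> h; have h2 : p (fun n => p (fun m => A (m + n))) by apply/hid.
exact: pI h h2.
Qed.

Lemma star_shift A n : star A n -> p (fun m => star A (m + n)).
Proof.
move=> [_ h]; have := star_p h; apply: pmono => m [h1 h2]; split => //.
by apply: (pmono _ h2) => m'; rewrite addnA.
Qed.

Lemma star_ex A M : p A -> exists y, star A y /\ M < y.
Proof.
move=> h; apply: NNPP => ne; apply: pF.
apply: (pmono _ (pI (star_p h) (pgt M))) => n [h1 h2]; apply: ne; by exists n.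
Qed.

Definition chs (A : nat -> Prop) (M : nat) : nat :=
  match excluded_middle_informative (exists y, star A y /\ M < y) with
  | left h => proj1_sig (constructive_indefinite_description _ h)
  | right _ => 0
  end.

Lemma chs_spec A M : p A -> star A (chs A M) /\ M < chs A M.
Proof.
move=> h; rewrite /chs; case: excluded_middle_informative => [h'|h'].
  exact: proj2_sig (constructive_indefinite_description _ h').
by exfalso; apply: h'; apply: star_ex.
Qed.

Fixpoint seqA (A : nat -> Prop) (i : nat) : (nat -> Prop) * nat :=
  match i with
  | 0 => (A, chs A 0)
  | i'.+1 => let: (Ai, xi) := seqA A i' in
      let A' := fun n => star Ai n /\ star Ai (n + xi) /\ xi < n in (A', chs A' xi)
  end.

Section Seq.
Variable A : nat -> Prop.
Hypothesis hA : p A.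
Let Ai i := (seqA A i).1.
Let xs i := (seqA A i).2.

Lemma seqA_S i : Ai i.+1 = (fun n => star (Ai i) n /\ star (Ai i) (n + xs i) /\ xs i < n)
  /\ xs i.+1 = chs (Ai i.+1) (xs i).
Proof. by rewrite /Ai /xs /=; case: (seqA A i). Qed.

Lemma inv i : p (Ai i) /\ star (Ai i) (xs i).
Proof.
elim: i => [|i [IH1 IH2]].
  by split => //; rewrite /Ai /xs /=; have [h _] := chs_spec 0 hA.
have [e1 e2] := seqA_S i.
have hp : p (Ai i.+1).
  rewrite e1; apply: pI; first exact: star_p.
  apply: pI; first exact: star_shift IH2.
  exact: pgt.
by split => //; rewrite e2; have [h _] := chs_spec (xs i) hp.
Qed.

Lemma xs_inc i : xs i < xs i.+1.
Proof.
have [e1 e2] := seqA_S i; rewrite e2.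
by have [_ h] := chs_spec (xs i) (proj1 (inv i.+1)).
Qed.

Lemma Ai_mono i j n : i <= j -> Ai j n -> Ai i n.
Proof.
move=> hij; rewrite -(subnKC hij); elim: (j - i) => [|d IH]; first by rewrite addn0.
rewrite addnS => h; apply: IH; have [e1 _] := seqA_S (i + d); rewrite e1 in h.
by case: h => [[]].
Qed.

Lemma FS : forall F, F != [::] -> uniq F -> forall i, (forall k, k \in F -> i <= k) ->
  Ai i (\sum_(k <- F) xs k).
Proof.
move=> F; move: {2}(size F) (leqnn (size F)) => N.
elim: N F => [|N IH] F hsz hF uF i hi.
  by case: F hF hsz uF hi.
have ex : exists n, n \in F by clear -hF; case: F hF => // a l _; exists a; rewrite inE eqxx.
case: (ex_minnP ex) => i0 hi0 hmin.
have hperm := perm_to_rem hi0.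
rewrite (perm_big _ hperm) big_cons /=.
set F' := rem i0 F.
have uF' : uniq F' by rewrite rem_uniq.
have hF' : forall k, k \in F' -> i0 < k.
  move=> k; rewrite mem_rem_uniq // inE => /andP [ne hk].
  by rewrite ltn_neqAle eq_sym ne hmin.
have hii0 : i <= i0 by apply: hi.
case: (eqVneq F' [::]) => [->|nF'].
  rewrite big_nil addn0; apply: (Ai_mono hii0); exact: (proj1 (proj2 (inv i0))).
have hs : size F' <= N by rewrite size_rem //; move: hsz; case: (size F) => //.
have := IH F' hs nF' uF' i0.+1 hF'.
have [e1 _] := seqA_S i0; rewrite e1 => [[_ [[h _] _]]].
by apply: (Ai_mono hii0); rewrite addnC.
Qed.

End Seq.

Lemma GG A : p A -> IPset A.
Proof.
move=> hA; exists (fun i => (seqA A i).2); split; first exact: xs_inc.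
move=> F hF uF; exact: (FS hA hF uF (i := 0)).
Qed.

End GG.

Lemma IPstar_central A : IPstar A -> central_star A.
Proof.
move=> hA p [hu [hnp [hid _]]].
case: (pU hu A) => // h.
have [n [h1 h2]] := hA _ (GG hu hnp hid h).
by exfalso; apply: h2.
Qed.

Lemma IPstar_inf A : IPstar A -> infinite_set A.
Proof.
move=> hA N.
have : IPset (fun n => N <= n).
  exists (fun i => N + i); split; first by move=> i; lia.
  case=> // a l _ _; rewrite big_cons; lia.
move=> /hA [n [h1 h2]]; by exists n.
Qed.

Theorem mainTheorem14 (w w' : word) :
  sturmian w -> sturmian w' -> nonsingular w -> nonsingular w' ->
  forall k k' : nat, 0 < k -> 0 < k' ->
    let A := fun n => occ w (factor w 0 k) n /\ occ w' (factor w' 0 k') n in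
    IPstar A /\ central_star A /\ infinite_set A.
Proof.
move=> sw sw' ns ns' k k' _ _ A.
have hA : IPstar A by exact: IPstar_main.
split => //; split; [exact: IPstar_central | exact: IPstar_inf].
Qed.
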